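(* Under the setup below, for every $\mathbf{v}\in\mathbb{R}^E$, letting $\mathbf{d}=\mathbf{B}^\top\mathbf{W}^{1/2}\mathbf{v}$, $\mathbf{z}=\widetilde{\mathbf{\Gamma}}\mathbf{\Pi}^{(\eta-1)}\cdots\mathbf{\Pi}^{(0)}\mathbf{d}$ and $\widetilde{\mathbf{f}}=\sum_{H\in\mathcal{T}}\mathbf{M}^{(H)}\mathbf{z}|_{F_H}$, we have $\mathbf{B}^\top\mathbf{W}^{1/2}\widetilde{\mathbf{f}}=\mathbf{B}^\top\mathbf{W}^{1/2}\mathbf{v}$.
   Context: Setup. $G=(V,E)$ is a connected undirected graph with $|V|=n$, positive edge weights, $\mathbf{W}=\mathrm{diag}(\mathbf{w})$, signed incidence matrix $\mathbf{B}\in\mathbb{R}^{E\times V}$; for a region (edge-induced subgraph) $H$, $\mathbf{B}[H]$ is $\mathbf{B}$ with rows of edges not in $E(H)$ set to zero. All matrices/vectors are padded with zeros to $V$- or $E$-indexed dimensions; $\mathbf{x}|_S$ is $\mathbf{x}$ on $S$ and zero elsewhere; $\mathbf{I}$ is the $n\times n$ identity; $\mathbf{M}_{S,T}$ is the submatrix with rows $S$, columns $T$; $\mathbf{M}^{-1}$ is the Moore–Penrose pseudoinverse. $\mathcal{T}$ is a separator tree of $G$: a rooted binary tree of regions $H$ with vertex sets $\partial H$, $S(H)$, $F_H$, where the root is $G$ with $\partial G=\emptyset$, $F_G=S(G)$; a non-leaf node $H$ has two children $D_1,D_2$ whose edge sets partition $E(H)$ (no isolated vertices) with $V(D_1)\cap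 V(D_2)=S(H)$, $\partial D_j=(\partial H\cup S(H))\cap V(D_j)$, $F_H=S(H)\setminus\partial H$; a leaf has constantly many edges, $S(H)=\emptyset$, $F_H=V(H)\setminus\partial H$. The level $\eta(H)$ is the maximum number of edges on a tree path from $H$ down to a descendant (leaves 0); $\eta$ is the height; $\mathcal{T}(i)$ is the set of level-$i$ nodes; $\{F_H\}$ partitions $V$. Recursive Laplacians. For a leaf $H$, $\mathbf{L}^{(H)}=\mathbf{B}[H]^\top\mathbf{W}\mathbf{B}[H]$. For each node $D$ we are given a Laplacian $\widetilde{\mathrm{SC}}(\mathbf{L}^{(D)},\partial D)$ supported on $\partial D$; for a non-leaf $H$ with children $D_1,D_2$, $\mathbf{L}^{(H)}=\widetilde{\mathrm{SC}}(\mathbf{L}^{(D_1)},\partial D_1)+\widetilde{\mathrm{SC}}(\mathbf{L}^{(D_2)},\partial D_2)$. Assume each $\mathbf{L}^{(H)}$ is the Laplacian of a connected graph on vertex set $\partial H\cup F_H$. Operators. $\mathbf{X}^{(H)}=\mathbf{L}^{(H)}_{\partial H,F_H}(\mathbf{L}^{(H)}_{F_H,F_H})^{-1}$; $\mathbf{\Pi}^{(i)}=\mathbf{I}-\sum_{H\in\mathcal{T}(i)}\mathbf{X}^{(H)}$ for $0\le i\le\eta-1$; $\widetilde{\mathbf{\Gamma}}=\sum_{H\in\mathcal{T}}(\mathbf{L}^{(H)}_{F_H,F_H})^{-1}$. For a node $D$ with parent $P$, $\mathbf{M}_{(D,P)}=(\mathbf{L}^{(D)})^{-1}\widetilde{\mathrm{SC}}(\mathbf{L}^{(D)},\partial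 D)$; $\mathbf{M}^{(H)}=\mathbf{W}^{1/2}\mathbf{B}[H]$ for a leaf $H$, and $\mathbf{M}^{(H)}=\mathbf{M}^{(D_1)}\mathbf{M}_{(D_1,H)}+\mathbf{M}^{(D_2)}\mathbf{M}_{(D_2,H)}$ for a non-leaf $H$ with children $D_1,D_2$. *)

(* Defs.v *)
From HB Require Import structures.
From mathcomp Require Import all_boot all_order all_algebra.
From Stdlib Require Import ClassicalEpsilon.
Set Implicit Arguments.
Unset Strict Implicit.
Unset Printing Implicit Defensive.
Import GRing.Theory Num.Theory.
Local Open Scope ring_scope.

(* signed incidence matrix B in R^{E x V} (edge e oriented from tl e to hd e) *)
Definition incidence (R : nzRingType) (n m : nat) (tl hd : 'I_m -> 'I_n)
  : 'M[R]_(m, n) :=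
  \matrix_(e, v) ((v == tl e)%:R - (v == hd e)%:R).

Definition Wmx (R : rcfType) (m : nat) (w : 'I_m -> R) : 'M[R]_m :=
  diag_mx (\row_i w i).
Definition sqrtW (R : rcfType) (m : nat) (w : 'I_m -> R) : 'M[R]_m :=
  diag_mx (\row_i Num.sqrt (w i)).

Definition gadj (n m : nat) (tl hd : 'I_m -> 'I_n) : rel 'I_n :=
  fun u v => [exists e, ((tl e == u) && (hd e == v)) || ((tl e == v) && (hd e == u))].
Definition graph_connected (n m : nat) (tl hd : 'I_m -> 'I_n) : Prop :=
  forall u v, connect (gadj tl hd) u v.

Definition Vset (n m : nat) (tl hd : 'I_m -> 'I_n) (E : {set 'I_m}) : {set 'I_n} :=
  [set v | [exists e in E, (tl e == v) || (hd e == v)]].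

(* B[H]: rows of edges not in E(H) set to zero *)
Definition restrict_rows (R : nzRingType) (m n : nat) (E : {set 'I_m})
  (B : 'M[R]_(m, n)) : 'M[R]_(m, n) :=
  \matrix_(e, v) (if e \in E then B e v else 0).

(* M_{S,T} padded with zeros to n x n *)
Definition submx_pad (R : nzRingType) (n : nat) (A : 'M[R]_n) (S T : {set 'I_n})
  : 'M[R]_n :=
  \matrix_(i, j) (if (i \in S) && (j \in T) then A i j else 0).

Definition vrestrict (R : nzRingType) (n : nat) (x : 'cV[R]_n) (S : {set 'I_n})
  : 'cV[R]_n :=
  \col_i (if i \in S then x i 0 else 0).

Definition penrose (R : nzRingType) (n : nat) (A X : 'M[R]_n) : Prop :=
  [/\ A *m X *m A = A, X *m A *m X = X,
      (A *m X)^T = A *m X & (X *m A)^T = X *m A].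

Definition pinv (R : nzRingType) (n : nat) (A : 'M[R]_n) : 'M[R]_n :=
  epsilon (inhabits 0) (penrose A).

Definition is_lap (R : numDomainType) (n : nat) (L : 'M[R]_n) : Prop :=
  [/\ forall i j, L i j = L j i,
      forall i j, i != j -> L i j <= 0 &
      forall i, \sum_j L i j = 0].

Definition supported_on (R : nzRingType) (n : nat) (L : 'M[R]_n) (S : {set 'I_n})
  : Prop :=
  forall i j, (i \notin S) || (j \notin S) -> L i j = 0.

(* L is the Laplacian of a connected graph on vertex set S
   (edges of that graph: pairs i,j with L i j < 0) *)
Definition connected_lap_on (R : numDomainType) (n : nat) (L : 'M[R]_n)
  (S : {set 'I_n}) : Prop :=
  [/\ is_lap L, supported_on L S &
      forall i j, i \in S -> j \in S -> connect (fun a b => L a b < 0) i j].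

Record stree (N : finType) (n m : nat) := STree {
  st_root : N;
  st_ch : N -> option (N * N);   (* None: leaf; Some (D1, D2): children *)
  st_E : N -> {set 'I_m};
  st_bd : N -> {set 'I_n};
  st_S : N -> {set 'I_n};
  st_F : N -> {set 'I_n}
}.

Section Tree.
Variables (N : finType) (n m : nat) (T : stree N n m).

Definition chrel : rel N := fun H D =>
  match st_ch T H with Some (D1, D2) => (D == D1) || (D == D2) | None => false end.

Fixpoint lvl_fuel (k : nat) (H : N) : nat :=
  match k with
  | 0 => 0
  | k'.+1 => match st_ch T H with
             | None => 0
             | Some (D1, D2) => (maxn (lvl_fuel k' D1) (lvl_fuel k' D2)).+1
             end
  end.

(* eta(H): max number of edges on a tree path from H down to a descendant *)
Definition level (H : N) : nat := lvl_fuel #|N| H.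
Definition height : nat := level (st_root T).

End Tree.

Definition is_septree (N : finType) (n m : nat) (tl hd : 'I_m -> 'I_n)
  (T : stree N n m) : Prop :=
  let V := Vset tl hd in
  (forall H, connect (chrel T) (st_root T) H) /\
  (forall H1 H2 D, chrel T H1 D -> chrel T H2 D -> H1 = H2) /\
  (forall H D, chrel T H D -> ~~ connect (chrel T) D H) /\
  st_E T (st_root T) = setT /\ st_bd T (st_root T) = set0 /\
  (forall H D1 D2, st_ch T H = Some (D1, D2) ->
     [/\ D1 != D2,
         st_E T D1 :|: st_E T D2 = st_E T H /\ [disjoint st_E T D1 & st_E T D2],
         V (st_E T D1) :&: V (st_E T D2) = st_S T H,
         st_bd T D1 = (st_bd T H :|: st_S T H) :&: V (st_E T D1) /\
         st_bd T D2 = (st_bd T H :|: st_S T H) :&: V (st_E T D2) &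
         st_F T H = st_S T H :\: st_bd T H]) /\
  (forall H, st_ch T H = None ->
     st_S T H = set0 /\ st_F T H = V (st_E T H) :\: st_bd T H) /\
  (forall v, exists H, v \in st_F T H) /\
  (forall H1 H2 v, v \in st_F T H1 -> v \in st_F T H2 -> H1 = H2).

(* recursive Laplacians L^(H) and the given approximate Schur complements SCt D *)
Definition rec_laplacians (R : rcfType) (N : finType) (n m : nat)
  (tl hd : 'I_m -> 'I_n) (w : 'I_m -> R) (T : stree N n m)
  (L SCt : N -> 'M[R]_n) : Prop :=
  let B := incidence R tl hd in
  (forall H, st_ch T H = None ->
     L H = (restrict_rows (st_E T H) B)^T *m Wmx w *m restrict_rows (st_E T H) B) /\
  (forall D, is_lap (SCt D) /\ supported_on (SCt D) (st_bd T D)) /\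
  (forall H D1 D2, st_ch T H = Some (D1, D2) -> L H = SCt D1 + SCt D2) /\
  (forall H, connected_lap_on (L H) (st_bd T H :|: st_F T H)).

Section Ops.
Variables (R : rcfType) (N : finType) (n m : nat) (tl hd : 'I_m -> 'I_n)
  (w : 'I_m -> R) (T : stree N n m) (L SCt : N -> 'M[R]_n).

Definition LFFinv (H : N) : 'M[R]_n :=
  pinv (submx_pad (L H) (st_F T H) (st_F T H)).

Definition Xop (H : N) : 'M[R]_n :=
  submx_pad (L H) (st_bd T H) (st_F T H) *m LFFinv H.

Definition Piop (i : nat) : 'M[R]_n :=
  1%:M - \sum_(H | level T H == i) Xop H.

Fixpoint Pi_apply (k : nat) (d : 'cV[R]_n) : 'cV[R]_n :=
  match k with
  | 0 => d
  | k'.+1 => Piop k' *m Pi_apply k' d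
  end.

Definition Gamma : 'M[R]_n := \sum_H LFFinv H.

Definition Mlink (D : N) : 'M[R]_n := pinv (L D) *m SCt D.

Definition leafM (H : N) : 'M[R]_(m, n) :=
  sqrtW w *m restrict_rows (st_E T H) (incidence R tl hd).

Fixpoint Mrec (k : nat) (H : N) : 'M[R]_(m, n) :=
  match k with
  | 0 => leafM H
  | k'.+1 => match st_ch T H with
             | None => leafM H
             | Some (D1, D2) => Mrec k' D1 *m Mlink D1 + Mrec k' D2 *m Mlink D2
             end
  end.

Definition Mop (H : N) : 'M[R]_(m, n) := Mrec (level T H) H.

End Ops.

(* Main.v *)
Require Import Defs.
From HB Require Import structures.
From mathcomp Require Import all_boot all_order all_algebra.
From Stdlib Require Import ClassicalEpsilon.
From mathcomp Require Import ring zify.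
Set Implicit Arguments.
Unset Strict Implicit.
Unset Printing Implicit Defensive.
Import GRing.Theory Num.Theory.
Local Open Scope ring_scope.

Section PinvSec.
Variable R : rcfType.

Lemma trK_eq0 n p (K : 'M[R]_(n, p)) : K^T *m K = 0 -> K = 0.
Proof.
move=> H; apply/matrixP => i j; rewrite mxE.
have := congr1 (fun M : 'M_p => M j j) H; rewrite !mxE => Hs.
have : \sum_(k < n) K k j ^+ 2 = 0.
  by rewrite -[RHS]Hs; apply: eq_bigr => k _; rewrite !mxE expr2.
move=> /psumr_eq0P => /(_ (fun k _ => sqr_ge0 _)) /(_ i isT) /eqP.
by rewrite sqrf_eq0 => /eqP.
Qed.

Lemma pinv_exists0 n r (A : 'M[R]_n) (C : 'M_(n, r)) D :
  C *m D = A -> row_full C -> row_free D -> exists X, penrose A X.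
Proof.
move=> AE0 Cf Df; have {AE0}AE : A = C *m D by rewrite AE0.
case/row_fullP: Cf => Bc HBc.
case/row_freeP: Df => Bd HBd.
set M := C^T *m C; set N := D *m D^T.
have Mu : M \in unitmx.
  rewrite -row_free_unit; apply: inj_row_free => v Hv.
  have : (C *m v^T)^T *m (C *m v^T) = 0.
    by rewrite trmx_mul trmxK !mulmxA -(mulmxA v C^T C) -/M Hv !mul0mx.
  move/trK_eq0 => Hc.
  apply: trmx_inj; rewrite trmx0 -[v^T]mul1mx -HBc -mulmxA Hc mulmx0 //.
have Nu : N \in unitmx.
  rewrite -row_free_unit; apply: inj_row_free => v Hv.
  have : (v *m D)^T^T *m (v *m D)^T = 0.
    by rewrite trmxK trmx_mul !mulmxA -(mulmxA v D D^T) -/N Hv !mul0mx.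
  move/trK_eq0 => /(congr1 trmx); rewrite trmxK trmx0 => Hc.
  by rewrite -[v]mulmx1 -HBd mulmxA Hc mul0mx.
have Ms : M^T = M by rewrite /M trmx_mul trmxK.
have Ns : N^T = N by rewrite /N trmx_mul trmxK.
exists (D^T *m invmx N *m invmx M *m C^T).
have AX : A *m (D^T *m invmx N *m invmx M *m C^T) = C *m invmx M *m C^T.
  by rewrite AE !mulmxA -(mulmxA C D) -/N mulmxK.
have XA : (D^T *m invmx N *m invmx M *m C^T) *m A = D^T *m invmx N *m D.
  by rewrite AE !mulmxA -(mulmxA _ C^T C) -/M mulmxKV.
split.
- by rewrite AX AE !mulmxA -(mulmxA _ C^T C) -/M mulmxKV.
- rewrite XA !mulmxA -(mulmxA _ D D^T) -/N mulmxKV //.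
- by rewrite AX !trmx_mul trmxK trmx_inv Ms mulmxA.
- by rewrite XA !trmx_mul trmxK trmx_inv Ns mulmxA.
Qed.

Lemma pinv_exists n (A : 'M[R]_n) : exists X, penrose A X.
Proof. apply: (@pinv_exists0 n (\rank A) A (col_base A) (row_base A)); [exact: mulmx_base | exact: col_base_full | exact: row_base_free]. Qed.

Lemma pinvP n (A : 'M[R]_n) : penrose A (pinv A).
Proof. by rewrite /pinv; apply: epsilon_spec; apply: pinv_exists. Qed.



Lemma pinv_range n p (A : 'M[R]_n) (Y : 'M[R]_(n, p)) :
  A^T = A -> (forall k : 'cV[R]_n, A *m k = 0 -> Y^T *m k = 0) ->
  A *m pinv A *m Y = Y.
Proof.
move=> As HY; case: (pinvP A) => H1 H2 H3 H4.
move: (pinv A) H1 H2 H3 H4 => X H1 H2 H3 H4.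
set K := Y - A *m X *m Y.
have AK : A *m K = 0.
  have E : A *m (A *m X) = A by rewrite -{1}As -H3 -trmx_mul H1 As.
  by rewrite /K mulmxBr mulmxA E subrr.
have YK : Y^T *m K = 0.
  apply/matrixP => i j; have := HY (col j K).
  rewrite colE mulmxA AK mul0mx => /(_ erefl) /matrixP /(_ i 0).
  by rewrite mulmxA -colE !mxE.
have PK : A *m X *m K = 0 by rewrite /K mulmxBr !mulmxA H1 subrr.
have KT : K^T = Y^T - Y^T *m (A *m X) by rewrite /K linearB /= trmx_mul H3.
have : K^T *m K = 0 by rewrite KT mulmxBl YK -mulmxA PK mulmx0 subrr.
by move/trK_eq0 => /eqP; rewrite subr_eq0 => /eqP <-.
Qed.

Lemma pinv_supp n (A : 'M[R]_n) S : supported_on A S -> supported_on (pinv A) S.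
Proof.
move=> HA i j; case: (pinvP A) => H1 H2 H3 H4.
move: (pinv A) H1 H2 H3 H4 => X H1 H2 H3 H4.
case/orP => Hn.
- have E : X = A^T *m X^T *m X by rewrite -trmx_mul H4 H2.
  rewrite E -mulmxA mxE big1 // => k _; rewrite mxE HA ?mul0r //.
  by rewrite Hn orbT.
- have E : X = X *m X^T *m A^T by rewrite -mulmxA -trmx_mul H3 mulmxA H2.
  rewrite E mxE big1 // => k _; rewrite [A^T k j]mxE HA ?mulr0 //.
  by rewrite Hn.
Qed.

Lemma lap_quad0 n (L : 'M[R]_n) (x : 'I_n -> R) : is_lap L ->
  \sum_i \sum_j x i * L i j * x j = 0 -> forall i j, L i j < 0 -> x i = x j.
Proof.
case=> Ls Lneg Lrow Hq.
have T1 : \sum_i \sum_j L i j * x i ^+ 2 = 0.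
  rewrite big1 // => i _; rewrite -mulr_suml Lrow mul0r //.
have T3 : \sum_i \sum_j L i j * x j ^+ 2 = 0.
  rewrite exchange_big big1 // => j _.
  rewrite -mulr_suml.
  have -> : \sum_i L i j = \sum_i L j i by apply: eq_bigr => i _; rewrite Ls.
  by rewrite Lrow mul0r.
have E : \sum_i \sum_j (- L i j) * (x i - x j) ^+ 2 =
   (\sum_i \sum_j x i * L i j * x j) *+ 2 - \sum_i \sum_j L i j * x i ^+ 2
     - \sum_i \sum_j L i j * x j ^+ 2.
  rewrite -sumrMnl -!sumrB; apply: eq_bigr => i _.
  rewrite -sumrMnl -!sumrB; apply: eq_bigr => j _.
  by rewrite mulr2n; ring.
rewrite Hq T1 T3 mul0rn !subr0 in E.
have Hge : forall i j, 0 <= - L i j * (x i - x j) ^+ 2.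
  move=> i j; case: (eqVneq i j) => [->|Hij]; first by rewrite subrr expr0n mulr0.
  by apply: mulr_ge0; [rewrite oppr_ge0; apply: Lneg | apply: sqr_ge0].
move=> i j Hl.
have Hi := psumr_eq0P (fun i _ => sumr_ge0 _ (fun j _ => Hge i j)) E (i := i) isT.
have Hij := psumr_eq0P (fun j _ => Hge i j) Hi (i := j) isT.
move/eqP: Hij; rewrite mulf_eq0 oppr_eq0 (negbTE (ltr0_neq0 Hl)) /= sqrf_eq0 subr_eq0.
by move/eqP.
Qed.

Lemma conn_const n (L : 'M[R]_n) (x : 'I_n -> R) :
  (forall a b, L a b < 0 -> x a = x b) ->
  forall i j, connect (fun a b => L a b < 0) i j -> x i = x j.
Proof.
move=> Hx i j /connectP [p]; elim: p i => [|a p IH] i /=; first by move=> _ ->.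
by case/andP => Hia Hp Hj; rewrite (Hx _ _ Hia); apply: IH.
Qed.

End PinvSec.

Section Main.
Variables (R : rcfType) (n m : nat) (tl hd : 'I_m -> 'I_n) (w : 'I_m -> R)
  (N : finType) (T : stree N n m) (L SCt : N -> 'M[R]_n).
Hypothesis Hw : forall e, 0 < w e.
Hypothesis Hsep : is_septree tl hd T.
Hypothesis Hrec : rec_laplacians tl hd w T L SCt.

Local Notation Fs := (st_F T).
Local Notation Bds := (st_bd T).
Local Notation LFF H := (submx_pad (L H) (st_F T H) (st_F T H)).
Local Notation B := (incidence R tl hd).

Lemma Lconn H : connected_lap_on (L H) (Bds H :|: Fs H).
Proof. by case: Hrec => _ [_ [_]]. Qed.
Lemma SCt_facts D : is_lap (SCt D) /\ supported_on (SCt D) (Bds D).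
Proof. by case: Hrec => _ [H1 _]. Qed.
Lemma L_leaf H : st_ch T H = None ->
  L H = (restrict_rows (st_E T H) B)^T *m Wmx w *m restrict_rows (st_E T H) B.
Proof. by case: Hrec => H1 _; apply: H1. Qed.
Lemma L_node H D1 D2 : st_ch T H = Some (D1, D2) -> L H = SCt D1 + SCt D2.
Proof. by case: Hrec => _ [_ [H1 _]]; apply: H1. Qed.

Lemma sep_nl H D1 D2 : st_ch T H = Some (D1, D2) ->
  [/\ D1 != D2,
      st_E T D1 :|: st_E T D2 = st_E T H /\ [disjoint st_E T D1 & st_E T D2],
      Vset tl hd (st_E T D1) :&: Vset tl hd (st_E T D2) = st_S T H,
      st_bd T D1 = (st_bd T H :|: st_S T H) :&: Vset tl hd (st_E T D1) /\
      st_bd T D2 = (st_bd T H :|: st_S T H) :&: Vset tl hd (st_E T D2) &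
      st_F T H = st_S T H :\: st_bd T H].
Proof. by case: Hsep => _ [_ [_ [_ [_ [H1 _]]]]]; apply: H1. Qed.
Lemma sep_leaf H : st_ch T H = None ->
  st_S T H = set0 /\ st_F T H = Vset tl hd (st_E T H) :\: st_bd T H.
Proof. by case: Hsep => _ [_ [_ [_ [_ [_ [H1 _]]]]]]; apply: H1. Qed.
Lemma sep_cover v : exists H, v \in Fs H.
Proof. by case: Hsep => _ [_ [_ [_ [_ [_ [_ [H1 _]]]]]]]. Qed.
Lemma sep_disj H1 H2 v : v \in Fs H1 -> v \in Fs H2 -> H1 = H2.
Proof. by case: Hsep => _ [_ [_ [_ [_ [_ [_ [_ H]]]]]]]; apply: H. Qed.
Lemma sep_rootconn H : connect (chrel T) (st_root T) H.
Proof. by case: Hsep. Qed.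
Lemma sep_acyc H D : chrel T H D -> ~~ connect (chrel T) D H.
Proof. by case: Hsep => _ [_ [H1 _]]; apply: H1. Qed.
Lemma sep_rootE : st_E T (st_root T) = setT.
Proof. by case: Hsep => _ [_ [_ [H1 _]]]. Qed.
Lemma sep_rootBd : Bds (st_root T) = set0.
Proof. by case: Hsep => _ [_ [_ [_ [H1 _]]]]. Qed.

Lemma BdF H v : v \in Bds H -> v \notin Fs H.
Proof.
move=> Hv; case E: (st_ch T H) => [[D1 D2]|].
- by case: (sep_nl E) => _ _ _ _ ->; rewrite in_setD Hv.
- by case: (sep_leaf E) => _ ->; rewrite in_setD Hv.
Qed.

Lemma lap_sym (A : 'M[R]_n) : is_lap A -> A^T = A.
Proof. by case=> Ls _ _; apply/matrixP => i j; rewrite mxE Ls. Qed.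

Lemma lap_colsum (A : 'M[R]_n) j : is_lap A -> \sum_i A i j = 0.
Proof.
case=> Ls _ Lr; rewrite -[RHS](Lr j); apply: eq_bigr => i _; exact: Ls.
Qed.

Lemma LFF_sym H : (LFF H)^T = LFF H.
Proof.
case: (Lconn H) => [[Ls _ _] _ _].
by apply/matrixP => i j; rewrite !mxE andbC Ls.
Qed.

Lemma LFF_supp H : supported_on (LFF H) (Fs H).
Proof.
move=> i j Hij; rewrite mxE; case: ifP => // /andP[Hi Hj].
by rewrite Hi Hj in Hij.
Qed.

Lemma pinvF_row H i k : i \notin Fs H -> pinv (LFF H) i k = 0.
Proof. by move=> Hi; have := pinv_supp (LFF_supp (H:=H)); apply; rewrite Hi. Qed.
Lemma pinvF_col H i k : k \notin Fs H -> pinv (LFF H) i k = 0.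
Proof. by move=> Hk; have := pinv_supp (LFF_supp (H:=H)); apply; rewrite Hk orbT. Qed.

Lemma lap_ker_const (A : 'M[R]_n) S (x : 'I_n -> R) : connected_lap_on A S ->
  \sum_i \sum_j x i * A i j * x j = 0 ->
  forall a b, a \in S -> b \in S -> x a = x b.
Proof.
case=> Hl _ Hc Hq a b Ha Hb; apply: (@conn_const _ _ A); last exact: Hc.
exact: lap_quad0 Hl Hq.
Qed.

Lemma Qlem H (u : 'cV[R]_n) :
  (Bds H != set0 \/ \sum_(i in Fs H) u i 0 = 0) ->
  LFF H *m pinv (LFF H) *m u = vrestrict u (Fs H).
Proof.
move=> Hc.
have Pu : pinv (LFF H) *m u = pinv (LFF H) *m vrestrict u (Fs H).
  apply/matrixP => i j; rewrite !mxE; apply: eq_bigr => k _.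
  rewrite !mxE (ord1 j); case: ifP => // /negbT Hk.
  by rewrite pinvF_col // !mul0r.
rewrite -mulmxA Pu mulmxA; apply: pinv_range; first exact: LFF_sym.
move=> k Hk.
pose x := fun i => if i \in Fs H then k i 0 else 0.
have Hx : forall a b, a \in Bds H :|: Fs H -> b \in Bds H :|: Fs H -> x a = x b.
  apply: (lap_ker_const (Lconn H)).
  rewrite big1 // => i _; rewrite /x; case: ifP => Hi; last first.
    by rewrite big1 // => j _; rewrite !mul0r.
  have : (LFF H *m k) i 0 = 0 by rewrite Hk mxE.
  rewrite mxE => E.
  apply: (@eq_trans _ _ (k i 0 * \sum_j LFF H i j * k j 0)); last by rewrite E mulr0.
  rewrite mulr_sumr; apply: eq_bigr => j _.
  rewrite mxE Hi /=; case: ifP => Hj; by rewrite ?mulrA ?mulr0 ?mul0r.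
apply/matrixP => a b; rewrite (ord1 a) (ord1 b) !mxE.
case: Hc => [Hb | Hs].
- case/set0Pn: Hb => b0 Hb0.
  rewrite big1 // => i _; rewrite !mxE; case: ifP => Hi; last by rewrite mul0r.
  have := Hx i b0; rewrite /x Hi (negbTE (BdF Hb0)) => ->; rewrite ?mulr0 //.
  + by rewrite in_setU Hi orbT.
  + by rewrite in_setU Hb0.
- case: (set_0Vmem (Fs H)) => [HF0 | [f Hf]].
    by rewrite big1 // => i _; rewrite !mxE HF0 in_set0 mul0r.
  rewrite (eq_bigr (fun i => (if i \in Fs H then u i 0 else 0) * k f 0)).
    by rewrite -mulr_suml -big_mkcond /= Hs mul0r.
  move=> i _; rewrite !mxE; case: ifP => Hi; last by rewrite !mul0r.
  have := Hx i f; rewrite /x Hi Hf => -> //.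
  + by rewrite in_setU Hi orbT.
  + by rewrite in_setU Hf orbT.
Qed.

Lemma Mlink_id D : L D *m pinv (L D) *m SCt D = SCt D.
Proof.
apply: pinv_range; first by case: (Lconn D) => Hl _ _; apply: lap_sym.
move=> k Hk.
have Hx : forall a b, a \in Bds D :|: Fs D -> b \in Bds D :|: Fs D -> k a 0 = k b 0.
  apply: (lap_ker_const (Lconn D) (x := fun i => k i 0)).
  rewrite big1 // => i _.
  have : (L D *m k) i 0 = 0 by rewrite Hk mxE.
  rewrite mxE => E.
  apply: (@eq_trans _ _ (k i 0 * \sum_j L D i j * k j 0)); last by rewrite E mulr0.
  by rewrite mulr_sumr; apply: eq_bigr => j _; rewrite mulrA.
case: (SCt_facts D) => [[SLs _ SLrow] SSup].
apply/matrixP => j a; rewrite (ord1 a) !mxE.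
case: (set_0Vmem (Bds D)) => [E0 | [b Hb]].
  by rewrite big1 // => i _; rewrite mxE SSup ?mul0r // E0 in_set0.
rewrite (eq_bigr (fun i => SCt D j i * k b 0)).
  by rewrite -mulr_suml SLrow mul0r.
move=> i _; rewrite mxE; case: (boolP (i \in Bds D)) => Hi.
  rewrite (Hx i b); first by rewrite SLs.
    by rewrite in_setU Hi.
  by rewrite in_setU Hb.
rewrite SSup ?Hi // (SLs j i) SSup ?Hi //.
by rewrite !mul0r.
Qed.

Lemma leafM_id H :
  B^T *m sqrtW w *m leafM tl hd w T H =
  (restrict_rows (st_E T H) B)^T *m Wmx w *m restrict_rows (st_E T H) B.
Proof.
have SW : sqrtW w *m sqrtW w = Wmx w.
  rewrite /sqrtW /Wmx mulmx_diag; congr diag_mx; apply/matrixP => i j.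
  by rewrite !mxE -expr2 sqr_sqrtr // Order.POrderTheory.ltW.
rewrite /leafM mulmxA -(mulmxA B^T (sqrtW w) (sqrtW w)) SW.
apply/matrixP => a b; rewrite !mxE; apply: eq_bigr => e _.
rewrite /Wmx !mul_mx_diag !mxE.
by case: ifP => He; rewrite ?mulr0.
Qed.

Fixpoint good (k : nat) (H : N) : bool :=
  match k with
  | 0 => if st_ch T H is None then true else false
  | k'.+1 => match st_ch T H with
             | None => true
             | Some (D1, D2) => good k' D1 && good k' D2
             end
  end.

Lemma good_leaf k H : st_ch T H = None -> good k H.
Proof. by case: k => [|k] /= ->. Qed.

Lemma good_S k H : good k H -> good k.+1 H.
Proof.
elim: k H => [|k IH] H /=; case E: (st_ch T H) => [[D1 D2]|] //=.
by case/andP => H1 H2; apply/andP; split; [apply: (IH _ H1) | apply: (IH _ H2)].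
Qed.

Lemma good_mono a b H : (a <= b)%N -> good a H -> good b H.
Proof.
elim: b => [|b IH]; first by rewrite leqn0 => /eqP ->.
rewrite leq_eqVlt => /orP [/eqP -> // | Hab] Hg.
by apply: good_S; apply: IH.
Qed.

Definition desc H := [set D | connect (chrel T) H D].

Lemma chrel_desc P D : chrel T P D -> desc D \proper desc P.
Proof.
move=> HPD; apply/properP; split.
  apply/subsetP => x; rewrite !inE => Hx.
  exact: connect_trans (connect1 HPD) Hx.
exists P; first by rewrite inE connect0.
by rewrite inE; apply: sep_acyc.
Qed.

Lemma chrel_inv P D : chrel T P D ->
  exists D1 D2, st_ch T P = Some (D1, D2) /\ (D = D1 \/ D = D2).
Proof.
rewrite /chrel; case: (st_ch T P) => [[D1 D2]|] //.
by case/orP => /eqP ->; exists D1, D2; auto.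
Qed.

Lemma chrelL P D1 D2 : st_ch T P = Some (D1, D2) -> chrel T P D1.
Proof. by rewrite /chrel => ->; rewrite eqxx. Qed.
Lemma chrelR P D1 D2 : st_ch T P = Some (D1, D2) -> chrel T P D2.
Proof. by rewrite /chrel => ->; rewrite eqxx orbT. Qed.

Lemma desc_gt0 H : (0 < #|desc H|)%N.
Proof. by apply/card_gt0P; exists H; rewrite inE connect0. Qed.

Lemma good_desc H : good (#|desc H|.-1) H.
Proof.
have [k Hk] : exists k, (#|desc H| <= k)%N by exists #|desc H|.
elim: k H Hk => [|k IH] H Hk.
  by move: (desc_gt0 H) Hk; clear; lia.
case E: (st_ch T H) => [[D1 D2]|]; last exact: good_leaf.
have L1 := proper_card (chrel_desc (chrelL E)).
have L2 := proper_card (chrel_desc (chrelR E)).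
have g1 := desc_gt0 D1; have g2 := desc_gt0 D2.
have -> : #|desc H|.-1 = (#|desc H|.-2).+1.
  by rewrite -subn2 -subn1; move: L1 g1; clear; lia.
rewrite /= E; apply/andP; split.
- apply: (good_mono _ (IH D1 _)); first by move: L1 g1; clear; lia.
  by move: L1 Hk; clear; lia.
- apply: (good_mono _ (IH D2 _)); first by move: L2 g2; clear; lia.
  by move: L2 Hk; clear; lia.
Qed.

Lemma good_all H : good #|N|.-1 H.
Proof.
apply: (good_mono _ (good_desc H)).
by rewrite -!subn1 leq_sub2r // max_card.
Qed.

Lemma good_lvl k H : good k H -> good (lvl_fuel T k H) H.
Proof.
elim: k H => [|k IH] H //=.
case E: (st_ch T H) => [[D1 D2]|] /=; last by rewrite E.
case/andP => H1 H2; rewrite E; apply/andP; split.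
- exact: (good_mono (leq_maxl _ _) (IH _ H1)).
- exact: (good_mono (leq_maxr _ _) (IH _ H2)).
Qed.

Lemma lvl_stable k H : good k H ->
  forall k', (k <= k')%N -> lvl_fuel T k' H = lvl_fuel T k H.
Proof.
elim: k H => [|k IH] H /=.
  case E: (st_ch T H) => [[D1 D2]|] // _ k' _.
  by case: k' => [|k'] //=; rewrite E.
case E: (st_ch T H) => [[D1 D2]|] /=.
  case/andP => H1 H2 [|k'] //= Hk; rewrite E.
  by rewrite (IH _ H1 k') // (IH _ H2 k').
by move=> _ [|k'] //= _; rewrite E.
Qed.

Lemma level_good H : good (level T H) H.
Proof.
apply: good_lvl; apply: (good_mono _ (good_all H)); exact: leq_pred.
Qed.

Lemma level_ch P D : chrel T P D -> (level T D < level T P)%N.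
Proof.
case/chrel_inv => D1 [D2 [E HD]].
have Hg1 := good_all D1; have Hg2 := good_all D2.
have : (0 < #|N|)%N by apply/card_gt0P; exists P.
rewrite /level; move: Hg1 Hg2; case: #|N| => [|K] // Hg1 Hg2 _.
case: HD => ->.
- rewrite (lvl_stable Hg1 (leqnSn K)) /= E ltnS; exact: leq_maxl.
- rewrite (lvl_stable Hg2 (leqnSn K)) /= E ltnS; exact: leq_maxr.
Qed.

Lemma path_level p x : path (chrel T) x p ->
  (level T (last x p) + size p <= level T x)%N.
Proof.
elim: p x => [|y p IH] x /=; first by rewrite addn0.
case/andP => Hxy Hp; rewrite addnS.
exact: leq_ltn_trans (IH y Hp) (level_ch Hxy).
Qed.

Lemma conn_level A H : connect (chrel T) A H -> (level T H <= level T A)%N.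
Proof.
case/connectP => p Hp ->; apply: leq_trans (path_level Hp).
exact: leq_addr.
Qed.

Lemma level_lt_height H : H != st_root T -> (level T H < height T)%N.
Proof.
move=> Hr; case/connectP: (sep_rootconn H) => p Hp Hl.
case: p Hp Hl => [|y p] Hp Hl; first by rewrite Hl eqxx in Hr.
have := path_level Hp; rewrite -Hl /height /= addnS => /(leq_trans _); apply.
by rewrite ltnS leq_addr.
Qed.

Lemma Mrec_good k H : good k H ->
  B^T *m sqrtW w *m Mrec tl hd w T L SCt k H = L H.
Proof.
elim: k H => [|k IH] H /=.
  case E: (st_ch T H) => [[D1 D2]|] // _.
  by rewrite leafM_id (L_leaf E).
case E: (st_ch T H) => [[D1 D2]|] /=; last first.
  by move=> _; rewrite leafM_id (L_leaf E).
case/andP => H1 H2; rewrite mulmxDr !mulmxA (IH _ H1) (IH _ H2).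
by rewrite !Mlink_id (L_node E).
Qed.

Lemma Mop_id H : B^T *m sqrtW w *m Mop tl hd w T L SCt H = L H.
Proof. exact: Mrec_good (level_good H). Qed.

Lemma L_p H (u : 'cV[R]_n) :
  L H *m (pinv (LFF H) *m u) = LFF H *m pinv (LFF H) *m u + Xop T L H *m u.
Proof.
rewrite /Xop /LFFinv -!mulmxA -mulmxDl.
have p0 : forall l j, l \notin Fs H -> (pinv (LFF H) *m u) l j = 0.
  by move=> l j Hl; rewrite mxE big1 // => k _; rewrite pinvF_row ?mul0r.
move: (pinv (LFF H) *m u) p0 => p p0.
case: (Lconn H) => _ Hsup _.
apply/matrixP => i j; rewrite !mxE; apply: eq_bigr => l _.
case: (boolP (l \in Fs H)) => Hl; last by rewrite p0 // !mulr0.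
rewrite !mxE Hl !andbT.
case: (boolP (i \in Fs H)) => Hi.
  by rewrite ifN ?addr0 //; apply/negP => /BdF; rewrite Hi.
case: (boolP (i \in Bds H)) => Hb; first by rewrite add0r.
by rewrite Hsup ?add0r // in_setU (negbTE Hb) (negbTE Hi).
Qed.

Lemma Lp_sum H (p : 'cV[R]_n) : \sum_i (L H *m p) i 0 = 0.
Proof.
case: (Lconn H) => Hl _ _.
rewrite (eq_bigr (fun i => \sum_j L H i j * p j 0)); last by move=> i _; rewrite mxE.
rewrite exchange_big big1 // => j _; rewrite -mulr_suml lap_colsum ?mul0r //.
Qed.

Lemma Xop_col H i k : k \notin Fs H -> Xop T L H i k = 0.
Proof. by move=> Hk; rewrite mxE big1 // => l _; rewrite /LFFinv pinvF_col ?mulr0. Qed.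

Lemma Xop_row H k j : k \notin Bds H -> Xop T L H k j = 0.
Proof. by move=> Hk; rewrite mxE big1 // => l _; rewrite mxE (negbTE Hk) mul0r. Qed.

Lemma XX0 H H' : (forall v, v \in Bds H' -> v \notin Fs H) ->
  Xop T L H *m Xop T L H' = 0.
Proof.
move=> Hd; apply/matrixP => i j; rewrite [LHS]mxE [RHS]mxE big1 // => k _.
case: (boolP (k \in Bds H')) => Hk.
  by rewrite (Xop_col i (Hd _ Hk)) mul0r.
by rewrite (Xop_row j Hk) mulr0.
Qed.

Lemma Xop_Bd0 H : Bds H = set0 -> Xop T L H = 0.
Proof. by move=> E; apply/matrixP => i j; rewrite Xop_row ?mxE // E in_set0. Qed.

Lemma Gamma_restr H (u : 'cV[R]_n) :
  vrestrict (Gamma T L *m u) (Fs H) = LFFinv T L H *m u.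
Proof.
apply/matrixP => i j; rewrite (ord1 j) mxE; case: ifP => Hi.
  rewrite /Gamma mulmx_suml summxE (bigD1 H) //= big1 ?addr0 // => H' HH'.
  rewrite mxE big1 // => l _; rewrite /LFFinv pinvF_row ?mul0r //.
  by apply/negP => Hi'; rewrite (sep_disj Hi Hi') eqxx in HH'.
rewrite mxE big1 // => l _; rewrite /LFFinv pinvF_row ?Hi ?mul0r //.
Qed.

Lemma anc_F H v : v \in Bds H ->
  exists A, [/\ v \in Fs A, (level T H < level T A)%N & connect (chrel T) A H].
Proof.
case/connectP: (sep_rootconn H) => p; elim/last_ind: p H => [|p y IH] H.
  by move=> _ -> ; rewrite sep_rootBd in_set0.
rewrite rcons_path last_rcons => /andP [Hp Hch] -> {H} Hv.
set P := last (st_root T) p in Hch.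
have Hlt := level_ch Hch.
case/chrel_inv: Hch => D1 [D2 [E HD]].
case: (sep_nl E) => _ _ _ [HB1 HB2] HF.
have : v \in Bds P :|: st_S T P.
  by case: HD => HD; move: Hv; rewrite HD ?HB1 ?HB2 inE => /andP [].
rewrite in_setU => /orP [HvP | HvS].
  case: (IH P Hp erefl HvP) => A [HA1 HA2 HA3].
  exists A; split => //; first exact: ltn_trans HA2.
  apply: (connect_trans HA3); apply: connect1.
  by case: HD => ->; [apply: (chrelL E) | apply: (chrelR E)].
case: (boolP (v \in Bds P)) => HvP.
  case: (IH P Hp erefl HvP) => A [HA1 HA2 HA3].
  exists A; split => //; first exact: ltn_trans HA2.
  apply: (connect_trans HA3); apply: connect1.
  by case: HD => ->; [apply: (chrelL E) | apply: (chrelR E)].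
exists P; split => //.
- by rewrite HF in_setD HvP.
- apply: connect1; by case: HD => ->; [apply: (chrelL E) | apply: (chrelR E)].
Qed.

Lemma BdF_level H H' : (level T H <= level T H')%N ->
  forall v, v \in Bds H' -> v \notin Fs H.
Proof.
move=> Hl v Hv; case: (anc_F Hv) => A [HA1 HA2 _].
apply/negP => Hv'; rewrite (sep_disj Hv' HA1) in Hl.
by move: (leq_ltn_trans Hl HA2); rewrite ltnn.
Qed.

Lemma Pi_formula (d : 'cV[R]_n) k :
  Pi_apply T L k d =
  d - \sum_(H | (level T H < k)%N) Xop T L H *m Pi_apply T L k d.
Proof.
elim: k => [|k IH] /=.
  by rewrite big_pred0 ?subr0 // => H; rewrite ltn0.
set P := Pi_apply T L k d in IH *.
have PE : Piop T L k *m P = P - \sum_(H | level T H == k) Xop T L H *m P.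
  by rewrite /Piop mulmxBl mul1mx mulmx_suml.
have HX : forall H, (level T H <= k)%N ->
    Xop T L H *m (Piop T L k *m P) = Xop T L H *m P.
  move=> H Hl; rewrite PE mulmxBr mulmx_sumr big1 ?subr0 // => H' /eqP HH'.
  rewrite mulmxA XX0 ?mul0mx //; apply: BdF_level; by rewrite HH'.
rewrite (eq_bigr (fun H => Xop T L H *m P)); last first.
  by move=> H Hl; apply: HX; rewrite -ltnS.
rewrite (bigID (fun H => (level T H < k)%N)) /=.
rewrite [X in _ - (X + _)](eq_bigl (fun H => (level T H < k)%N)); last first.
  by move=> H /=; lia.
rewrite [X in _ - (_ + X)](eq_bigl (fun H => level T H == k)); last first.
  by move=> H /=; lia.
rewrite PE; set S1 := \sum_(H | _) _ in IH *; set S2 := \sum_(H | _) _.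
by rewrite {1}IH opprD addrA.
Qed.

Lemma Pi_final (d : 'cV[R]_n) :
  \sum_H Xop T L H *m Pi_apply T L (height T) d = d - Pi_apply T L (height T) d.
Proof.
have E := Pi_formula d (height T).
set u := Pi_apply T L (height T) d in E *.
rewrite (bigID (fun H => (level T H < height T)%N)) /=.
rewrite [X in _ + X]big1 ?addr0; last first.
  move=> H Hn; case: (eqVneq H (st_root T)) => [-> | Hr].
    by rewrite Xop_Bd0 ?mul0mx // sep_rootBd.
  by rewrite level_lt_height in Hn.
set S := \sum_(H | _) _ in E *.
by rewrite [in RHS]E opprB addrC subrK.
Qed.

Local Notation V := (Vset tl hd).

Lemma child_facts P H : chrel T P H -> exists D',
  [/\ st_E T H :|: st_E T D' = st_E T P,
      V (st_E T H) :&: V (st_E T D') = st_S T P,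
      Bds H = (Bds P :|: st_S T P) :&: V (st_E T H),
      Fs P = st_S T P :\: Bds P &
      st_ch T P = Some (H, D') \/ st_ch T P = Some (D', H)].
Proof.
case/chrel_inv => D1 [D2 [E HD]].
case: (sep_nl E) => _ [HEu _] HS [HB1 HB2] HF.
case: HD => ->.
- by exists D2; split => //; left.
- by exists D1; rewrite setUC setIC; split => //; right.
Qed.

Lemma child_Bd P H v : chrel T P H -> v \in Bds H -> v \in Bds P \/ v \in Fs P.
Proof.
case/child_facts => D' [_ _ HB HF _]; rewrite HB HF !inE.
by case/andP => /orP [-> | ->]; [left | case: (v \in Bds P); [left | right]].
Qed.

Definition U H := [set v | [exists H', connect (chrel T) H H' && (v \in Fs H')]].

Lemma inU H H' v : connect (chrel T) H H' -> v \in Fs H' -> v \in U H.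
Proof. by move=> H1 H2; rewrite inE; apply/existsP; exists H'; rewrite H1 H2. Qed.

Lemma desc_Bd H H' v : connect (chrel T) H H' -> v \in Bds H' -> v \in Bds H :|: U H.
Proof.
case/connectP => p; elim/last_ind: p H' => [|p y IH] H'.
  by move=> _ -> Hv; rewrite in_setU Hv.
rewrite rcons_path last_rcons => /andP [Hp Hch] -> {H'} Hv.
case: (child_Bd Hch Hv) => [HvP | HvF]; first exact: IH Hp erefl HvP.
rewrite in_setU; apply/orP; right; apply: (inU _ HvF).
by apply/connectP; exists p.
Qed.

Lemma nondesc_Bd H H' v : ~~ connect (chrel T) H H' -> v \in Bds H' -> v \notin U H.
Proof.
move=> Hn Hv; case: (anc_F Hv) => A [HA1 _ HA3].
apply/negP; rewrite inE => /existsP [H'' /andP [Hc HF]].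
rewrite (sep_disj HF HA1) in Hc.
by rewrite (connect_trans Hc HA3) in Hn.
Qed.

Lemma V_mono (E1 E2 : {set 'I_m}) v : E1 \subset E2 -> v \in V E1 -> v \in V E2.
Proof.
move=> /subsetP Hs; rewrite !inE => /existsP [e /andP [He Hv]].
by apply/existsP; exists e; rewrite Hs.
Qed.

Lemma E_ch P H : chrel T P H -> st_E T H \subset st_E T P.
Proof. by case/child_facts => D' [<- _ _ _ _]; apply: subsetUl. Qed.

Lemma E_conn A H : connect (chrel T) A H -> st_E T H \subset st_E T A.
Proof.
case/connectP => p; elim/last_ind: p H => [|p y IH] H; first by move=> _ ->.
rewrite rcons_path last_rcons => /andP [Hp Hch] -> {H}.
exact: subset_trans (E_ch Hch) (IH _ Hp erefl).
Qed.

Lemma F_V H v : v \in Fs H -> v \in V (st_E T H).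
Proof.
case E: (st_ch T H) => [[D1 D2]|].
- case: (sep_nl E) => _ _ HS _ ->; rewrite in_setD -HS in_setI.
  case/andP => _ /andP [Hv _]; apply: (V_mono _ Hv).
  exact: (E_ch (chrelL E)).
- by case: (sep_leaf E) => _ ->; rewrite in_setD => /andP [].
Qed.

Lemma U_V H v : v \in U H -> v \in V (st_E T H).
Proof.
rewrite inE => /existsP [H' /andP [Hc HF]].
exact: V_mono (E_conn Hc) (F_V HF).
Qed.

Lemma V_BdU H v : v \in V (st_E T H) -> v \in Bds H :|: U H.
Proof.
have [k Hk] : exists k, (#|desc H| <= k)%N by exists #|desc H|.
elim: k H Hk v => [|k IH] H Hk v.
  by move: (desc_gt0 H) Hk; clear; lia.
case E: (st_ch T H) => [[D1 D2]|].
- case: (sep_nl E) => _ [HEu _] HS [HB1 HB2] HF.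
  rewrite -HEu inE => /existsP [e /andP [He Hv]].
  have HU : forall D, chrel T H D -> U D \subset U H.
    move=> D HD; apply/subsetP => x; rewrite !inE => /existsP [H' /andP [Hc HF']].
    by apply/existsP; exists H'; rewrite HF' (connect_trans (connect1 HD) Hc).
  have Hgen : forall D, chrel T H D -> e \in st_E T D ->
      Bds D = (Bds H :|: st_S T H) :&: V (st_E T D) -> v \in Bds H :|: U H.
    move=> D HD HeD HBD.
    have HvD : v \in V (st_E T D) by rewrite inE; apply/existsP; exists e; rewrite HeD.
    have HkD : (#|desc D| <= k)%N.
      by move: (proper_card (chrel_desc HD)) Hk; clear; lia.
    have := IH D HkD v HvD; rewrite in_setU => /orP [HB | HUD].
    + move: HB; rewrite HBD !inE => /andP [/orP [-> // | HSv] _].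
      case: (boolP (v \in Bds H)) => // HnB; apply/orP; right.
      by apply/existsP; exists H; rewrite connect0 HF in_setD HnB HSv.
    + by rewrite in_setU (subsetP (HU D HD) _ HUD) orbT.
  move: He; rewrite in_setU => /orP [He | He].
  + exact: (Hgen D1 (chrelL E) He HB1).
  + exact: (Hgen D2 (chrelR E) He HB2).
- case: (sep_leaf E) => _ HF Hv.
  case: (boolP (v \in Bds H)) => HB; first by rewrite in_setU HB.
  by rewrite in_setU (inU (connect0 _ _)) ?orbT // HF in_setD HB.
Qed.

Lemma V_cut H v : v \in V (st_E T H) -> v \in V (~: st_E T H) -> v \in Bds H.
Proof.
case/connectP: (sep_rootconn H) => p; elim/last_ind: p H => [|p y IH] H.
  move=> _ -> _; rewrite sep_rootE setCT inE => /existsP [e].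
  by rewrite in_set0.
rewrite rcons_path last_rcons => /andP [Hp Hch] -> {H}.
set P := last (st_root T) p in Hch *.
case: (child_facts Hch) => D' [HEu HVs HB _ _] HvH.
rewrite inE => /existsP [e /andP [He Hv]].
rewrite HB in_setI HvH andbT in_setU.
case: (boolP (e \in st_E T P)) => HeP.
- have HeD' : e \in st_E T D'.
    by move: HeP He; rewrite -HEu in_setU in_setC => /orP [-> | ->].
  apply/orP; right; rewrite -HVs in_setI HvH /= inE.
  by apply/existsP; exists e; rewrite HeD'.
- apply/orP; left; apply: (IH P Hp erefl).
  + exact: V_mono (E_ch Hch) HvH.
  + by rewrite inE; apply/existsP; exists e; rewrite inE HeP.
Qed.

Lemma edge_closed H e : Bds H = set0 -> (tl e \in U H) = (hd e \in U H).
Proof.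
move=> HB0.
have HUV : forall v, v \in V (st_E T H) -> v \in U H.
  by move=> v /V_BdU; rewrite HB0 set0U.
case: (boolP (e \in st_E T H)) => He.
- rewrite !HUV // inE; apply/existsP; exists e; by rewrite He eqxx ?orbT.
- have Hnot : forall v, (tl e == v) || (hd e == v) -> v \notin U H.
    move=> v Hv; apply/negP => HvU.
    have : v \in Bds H.
      apply: V_cut (U_V HvU) _.
      by rewrite inE; apply/existsP; exists e; rewrite inE He.
    by rewrite HB0 in_set0.
  by rewrite (negbTE (Hnot _ _)) ?eqxx // (negbTE (Hnot (hd e) _)) ?eqxx ?orbT.
Qed.

Lemma sum_ind (A : {set 'I_n}) a : \sum_(i in A) ((i == a)%:R : R) = (a \in A)%:R.
Proof.
case: (boolP (a \in A)) => Ha.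
  by rewrite (bigD1 a) //= eqxx big1 ?addr0 // => i /andP [_ /negbTE ->].
rewrite big1 // => i Hi; rewrite (_ : (i == a) = false) //.
by apply/negP => /eqP Hia; rewrite -Hia Hi in Ha.
Qed.

Lemma dU0 H (v : 'cV[R]_m) : Bds H = set0 ->
  \sum_(i in U H) (B^T *m sqrtW w *m v) i 0 = 0.
Proof.
move=> HB0.
rewrite (eq_bigr (fun i => \sum_e B e i * (Num.sqrt (w e) * v e 0))); last first.
  move=> i _; rewrite [LHS]mxE; apply: eq_bigr => e _.
  by rewrite /sqrtW mul_mx_diag !mxE mulrA.
rewrite exchange_big big1 // => e _; rewrite -mulr_suml.
rewrite (eq_bigr (fun i => (i == tl e)%:R - (i == hd e)%:R)); last first.
  by move=> i _; rewrite mxE.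
by rewrite sumrB !sum_ind edge_closed // subrr mul0r.
Qed.

Lemma QX H' (u : 'cV[R]_n) :
  \sum_i (LFF H' *m pinv (LFF H') *m u) i 0 = - \sum_i (Xop T L H' *m u) i 0.
Proof.
move: (Lp_sum H' (pinv (LFF H') *m u)); rewrite L_p.
rewrite (eq_bigr (fun i => (LFF H' *m pinv (LFF H') *m u) i 0 + (Xop T L H' *m u) i 0)).
  by rewrite big_split /= => /eqP; rewrite addr_eq0 => /eqP.
by move=> i _; rewrite mxE.
Qed.

Lemma desc_card H H' : connect (chrel T) H H' -> H' != H -> (#|desc H'| < #|desc H|)%N.
Proof.
case/connectP => [[|D p]] /=; first by move=> _ ->; rewrite eqxx.
case/andP => HD Hp Hl _.
have Hc : connect (chrel T) D H' by apply/connectP; exists p.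
apply: leq_ltn_trans (proper_card (chrel_desc HD)).
apply: subset_leq_card; apply/subsetP => x; rewrite !inE.
exact: connect_trans Hc.
Qed.

Section Dem.
Variable v : 'cV[R]_m.
Let d := B^T *m sqrtW w *m v.
Let u := Pi_apply T L (height T) d.

Lemma uE : u = d - \sum_H Xop T L H *m u.
Proof. by rewrite /u Pi_final opprB addrC subrK. Qed.

Lemma SU H : Bds H = set0 ->
  \sum_(i in U H) u i 0 =
  \sum_(H' | connect (chrel T) H H') \sum_i (LFF H' *m pinv (LFF H') *m u) i 0.
Proof.
move=> HB0.
rewrite (eq_bigr (fun i => d i 0 - \sum_H' (Xop T L H' *m u) i 0)); last first.
  by move=> i _; rewrite {1}uE mxE [X in _ + X]mxE summxE.
rewrite sumrB dU0 // sub0r exchange_big /=.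
rewrite (bigID (fun H' => connect (chrel T) H H')) /=.
rewrite [X in _ + X]big1 ?addr0; last first.
  move=> H' Hn; rewrite big1 // => i HiU; rewrite mxE big1 // => k _.
  rewrite Xop_row ?mul0r //; apply/negP => Hb.
  by rewrite (negbTE (nondesc_Bd Hn Hb)) in HiU.
rewrite -sumrN; apply: eq_bigr => H' Hc.
rewrite QX; congr (- _); rewrite [LHS]big_mkcond /=; apply: eq_bigr => i _.
case: ifP => // /negbT HiU; rewrite mxE big1 // => k _.
rewrite Xop_row ?mul0r //; apply/negP => Hb.
by have := desc_Bd Hc Hb; rewrite HB0 set0U (negbTE HiU).
Qed.

Lemma SU2 H :
  \sum_(i in U H) u i 0 = \sum_(H' | connect (chrel T) H H') \sum_(i in Fs H') u i 0.
Proof.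
rewrite (eq_bigr (fun H' => \sum_i (if i \in Fs H' then u i 0 else 0))); last first.
  by move=> H' _; rewrite big_mkcond.
rewrite exchange_big big_mkcond /=; apply: eq_bigr => i _.
case: (sep_cover i) => H0 Hi0.
case: (boolP (connect (chrel T) H H0)) => Hc.
- rewrite (bigD1 H0) //= Hi0 big1 ?addr0 ?(inU Hc Hi0) // => H' /andP [_ HH'].
  rewrite ifN //; apply/negP => Hi'; by rewrite (sep_disj Hi0 Hi') eqxx in HH'.
- rewrite big1 => [|H' Hc']; last first.
    rewrite ifN //; apply/negP => Hi'; rewrite -(sep_disj Hi0 Hi') in Hc'.
    by rewrite Hc' in Hc.
  rewrite ifN //; apply/negP; rewrite inE => /existsP [H'' /andP [Hc'' Hi'']].
  by rewrite -(sep_disj Hi0 Hi'') in Hc''; rewrite Hc'' in Hc.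
Qed.

Lemma sumBd0 H : Bds H = set0 ->
  \sum_(H' | connect (chrel T) H H' && (Bds H' == set0)) \sum_(i in Fs H') u i 0 = 0.
Proof.
move=> HB0.
have := SU HB0; rewrite SU2 => /eqP; rewrite -subr_eq0 -sumrB => /eqP.
rewrite (bigID (fun H' => Bds H' == set0)) /=.
rewrite [X in _ + X]big1 ?addr0; last first.
  move=> H' /andP [_ HB']; rewrite Qlem; last by left.
  rewrite big_mkcond /= (eq_bigr (fun i => (vrestrict u (Fs H')) i 0)) ?subrr //.
  by move=> i _; rewrite mxE.
move=> Hs; rewrite -[RHS]Hs; apply: eq_bigr => H' /andP [_ /eqP HB'].
have Z : \sum_i (0 : 'cV[R]_n) i 0 = 0 by rewrite big1 // => i _; rewrite mxE.
rewrite QX Xop_Bd0 // mul0mx Z.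
by rewrite oppr0 subr0.
Qed.

Lemma Fsum0 H : Bds H = set0 -> \sum_(i in Fs H) u i 0 = 0.
Proof.
have [k Hk] : exists k, (#|desc H| <= k)%N by exists #|desc H|.
elim: k H Hk => [|k IH] H Hk HB0.
  by move: (desc_gt0 H) Hk; clear; lia.
have := sumBd0 HB0; rewrite (bigD1 H) /=; last by rewrite connect0 HB0 eqxx.
rewrite [X in _ + X]big1 ?addr0 // => H' /andP [/andP [Hc /eqP HB'] HH'].
apply: IH HB'; have := desc_card Hc HH'; move: Hk; clear; lia.
Qed.

Lemma main_sec :
  let z := Gamma T L *m u in
  let ft := \sum_H Mop tl hd w T L SCt H *m vrestrict z (Fs H) in
  B^T *m sqrtW w *m ft = d.
Proof.
move=> z ft.
rewrite /ft mulmx_sumr.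
rewrite (eq_bigr (fun H => vrestrict u (Fs H) + Xop T L H *m u)); last first.
  move=> H _; rewrite mulmxA Mop_id /z Gamma_restr /LFFinv L_p Qlem //.
  case: (eqVneq (Bds H) set0) => [E|E]; [right; exact: Fsum0 | by left].
rewrite big_split /= /u Pi_final -/u.
have -> : \sum_H vrestrict u (Fs H) = u.
  apply/matrixP => i j; rewrite summxE (ord1 j).
  case: (sep_cover i) => H0 HH0.
  rewrite (bigD1 H0) //= big1 ?mxE ?HH0 ?addr0 // => H' HH'.
  rewrite mxE ifN //; apply/negP => Hi; by rewrite (sep_disj HH0 Hi) eqxx in HH'.
by rewrite addrC subrK.
Qed.

End Dem.

End Main.

Theorem mainTheorem13 (R : rcfType) (n m : nat) (tl hd : 'I_m -> 'I_n)
  (w : 'I_m -> R) (N : finType) (T : stree N n m) (L SCt : N -> 'M[R]_n) :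
  (forall e, tl e != hd e) ->
  (forall e, 0 < w e) ->
  graph_connected tl hd ->
  is_septree tl hd T ->
  rec_laplacians tl hd w T L SCt ->
  forall v : 'cV[R]_m,
    let B := incidence R tl hd in
    let d := B^T *m sqrtW w *m v in
    let z := Gamma T L *m Pi_apply T L (height T) d in
    let ft := \sum_(H : N) Mop tl hd w T L SCt H *m vrestrict z (st_F T H) in
    B^T *m sqrtW w *m ft = B^T *m sqrtW w *m v.
Proof.
move=> _ Hw _ Hsep Hrec v B d z ft.
exact: (main_sec Hw Hsep Hrec v).
Qed.
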